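(* Let $G$ be a finite group such that every irreducible complex character of $G$ has degree at most $2$. Then $s(G)\leq 2\,\Gamma_e(G)$.
   Context: For a finite group $G$, $s(G)$ is the sum of all entries of its complex character table and $\Gamma_e(G)$ is the sum of the degrees of its irreducible complex characters. *)

(* Defs.v *)
From mathcomp Require Import all_boot all_order all_algebra all_fingroup all_solvable all_field all_character.
Set Implicit Arguments. Unset Strict Implicit. Unset Printing Implicit Defensive.
Import GRing.Theory Num.Theory.
Local Open Scope ring_scope.

Definition char_table_sum (gT : finGroupType) (G : {group gT}) : algC :=
  \sum_(i < Nirr G) \sum_(j < Nirr G) character_table G i j.

Definition sum_irr_degrees (gT : finGroupType) (G : {group gT}) : algC :=
  \sum_(i : Iirr G) 'chi[G]_i 1%g.

(* Main.v *)
Require Import Defs.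
From mathcomp Require Import all_boot all_order all_algebra all_fingroup all_solvable all_field all_character.
Import GRing.Theory Num.Theory.
Local Open Scope ring_scope.

Section S.
Variables (gT : finGroupType) (G : {group gT}).

Let L := [pred i : Iirr G | 'chi[G]_i \is a linear_char].
Let Lam x : algC := \sum_(i | L i) 'chi[G]_i x.

Lemma lam_mul j x : L j -> \sum_(i | L i) 'chi[G]_j x * 'chi_i x = Lam x.
Proof.
move=> Lj.
pose h i := cfIirr ('chi[G]_j * 'chi_i).
have hE i : 'chi_(h i) = 'chi_j * 'chi_i.
  by rewrite cfIirrE // mul_lin_irr ?mem_irr.
have uj : 'chi[G]_j \in GRing.unit by apply: lin_char_unitr.
have hinj : injective h.
  by move=> i1 i2 e; apply: irr_inj; apply: (mulrI uj); rewrite -!hE e.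
rewrite /Lam [RHS](reindex_inj hinj) /=; apply: eq_big => i.
  rewrite /L /= hE; have Lj' : 'chi_j \is a linear_char by [].
  apply/idP/idP => Hl; first by apply: rpredM.
  have Lv : ('chi_j)^-1 \is a linear_char by rewrite rpredV.
  have := rpredM Lv Hl; by rewrite mulKr.
by rewrite hE cfunE.
Qed.

Lemma lam_ge0 x : 0 <= Lam x.
Proof.
have e : Lam x * Lam x = (#|L|)%:R * Lam x.
  rewrite {1}/Lam mulr_suml.
  rewrite (eq_bigr (fun _ => Lam x)); last by move=> j Lj; rewrite mulr_sumr lam_mul.
  by rewrite sumr_const mulr_natl cardE.
have : Lam x * (Lam x - (#|L|)%:R) = 0 by rewrite mulrBr e mulrC subrr.
by move/eqP; rewrite mulf_eq0 subr_eq0 => /orP[] /eqP ->.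
Qed.


Let th x : algC := \sum_i 'chi[G]_i x.

Lemma th2 (hdeg : forall i : Iirr G, 'chi[G]_i 1%g <= 2) x :
  2 * th x = cfReg G x + Lam x.
Proof.
rewrite cfReg_sum sum_cfunE /Lam /th mulr_sumr [X in _ + X]big_mkcond -big_split /=.
apply: eq_bigr => i _; rewrite cfunE.
have := hdeg i; have := irr1_gt0 i; rewrite /L /= qualifE /= irr_char /=.
have /natrP[n ->] := Cnat_irr1 i.
rewrite ltr0n; case: n => [|[|[|n]]] //= _ H.
- by rewrite eqxx mul1r -mulr2n mulr_natl.
- by rewrite (_ : ((2:algC) == 1) = false) ?addr0 // (eqr_nat _ 2 1).
- by move: H; rewrite ler_nat.
Qed.

Lemma th_ge0 (hdeg : forall i : Iirr G, 'chi[G]_i 1%g <= 2) x : 0 <= th x.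
Proof.
have : 0 <= 2 * th x.
  by rewrite th2 // addr_ge0 ?lam_ge0 // cfRegE mulrn_wge0.
by rewrite pmulr_rge0.
Qed.

Lemma sum_th : \sum_(x in G) th x = #|G|%:R.
Proof.
have E i : \sum_(x in G) 'chi[G]_i x = #|G|%:R * (i == 0)%:R.
  have := cfdot_irr i 0; rewrite cfdotE irr0 => <-.
  rewrite mulrA mulfV ?mul1r ?neq0CG //; apply: eq_bigr => x Gx.
  by rewrite cfun1E Gx conjC1 mulr1.
rewrite /th exchange_big /= (eq_bigr _ (fun i _ => E i)) -mulr_sumr.
rewrite (bigD1 0) //= big1 ?addr0 ?mulr1 // => i /negbTE ->.
by [].
Qed.

Lemma table_sum : char_table_sum G = \sum_(xG in classes G) th (repr xG).
Proof.
rewrite /char_table_sum exchange_big /= [RHS](reindex_irr_class G).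
by apply: eq_bigr => j _; apply: eq_bigr => i _; rewrite mxE.
Qed.

Lemma classes_le (hdeg : forall i : Iirr G, 'chi[G]_i 1%g <= 2) :
  \sum_(xG in classes G) th (repr xG) <= \sum_(x in G) th x.
Proof.
have /and3P[/eqP cov ti _] := classes_partition G.
rewrite -{2}cov big_trivIset //=; apply: ler_sum => xG cl.
rewrite (bigD1 (repr xG)); last exact: (mem_repr_classes cl). rewrite lerDl.
by apply: sumr_ge0 => y _; apply: th_ge0.
Qed.


End S.

Theorem proposition2p12 (gT : finGroupType) (G : {group gT})
  (hdeg : forall i : Iirr G, 'chi[G]_i 1%g <= 2) :
  char_table_sum G <= 2 * sum_irr_degrees G.
Proof.
rewrite table_sum; apply: Order.POrderTheory.le_trans; first exact: classes_le.
rewrite sum_th -irr_sum_square /sum_irr_degrees mulr_sumr.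
apply: ler_sum => i _; rewrite expr2.
by apply: ler_wpM2r; [apply: Order.POrderTheory.ltW; apply: irr1_gt0 | apply: hdeg].
Qed.
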